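(* Let $G$ be an unweighted loopless graph on vertex set $[n]$ and let $t\ge 2$. Suppose that for all $\mathbf{a},\mathbf{b}\in\{0,1\}^n$, \[ V_{K_{t-1}}(\mathbf{a},\dots,\mathbf{a};G)\, V_{K_{t-1}}(\mathbf{b},\dots,\mathbf{b};G)\le \sum_{\phi:[t-1]\times\{1,2\}\to[n]}\ \prod_{\substack{i,j\in[t-1]\\ i\ne j}}G(\phi(i,1),\phi(j,2))\prod_{i\in[t-1]}a_{\phi(i,1)}b_{\phi(i,2)}. \] Then $\hom(K_t,G)^2\le\hom(K_t\times K_2,G)$.
   Context: $G(u,v)\in\{0,1\}$ is the adjacency indicator of $G$. For $s\ge1$ and $\mathbf{x}\in\mathbb{R}^n$, $V_{K_s}(\mathbf{x},\dots,\mathbf{x};G)=\sum_{\phi:[s]\to[n]}\prod_{\{i,j\}\in\binom{[s]}{2}}G(\phi(i),\phi(j))\prod_{r\in[s]}x_{\phi(r)}$ (an empty product is $1$). $\hom(H,G)$ is the number of homomorphisms from $H$ to $G$. The tensor product $K_t\times K_2$ has vertex set $[t]\times\{1,2\}$ with $(i,1)$ adjacent to $(j,2)$ iff $i\ne j$. *)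

(* Defs.v *)
From mathcomp Require Import all_boot.
Set Implicit Arguments. Unset Strict Implicit. Unset Printing Implicit Defensive.

Definition simple_graph (T : finType) (G : rel T) : Prop :=
  (forall u v, G u v = G v u) /\ (forall u, G u u = false).

Definition hom (VH VG : finType) (H : rel VH) (G : rel VG) : nat :=
  #|[set phi : {ffun VH -> VG} | [forall x, forall y, H x y ==> G (phi x) (phi y)]]|.

Definition complete_graph (t : nat) : rel 'I_t := fun i j => i != j.
Arguments complete_graph : clear implicits.

Definition tensor_graph (T1 T2 : finType) (H1 : rel T1) (H2 : rel T2)
  : rel (T1 * T2) := fun x y => H1 x.1 y.1 && H2 x.2 y.2.

(* V_{K_s}(x,...,x;G) for x : [n] -> {0,1} (bool coerced to 0/1) *)
Definition VK (n s : nat) (G : rel 'I_n) (x : 'I_n -> bool) : nat :=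
  \sum_(phi : {ffun 'I_s -> 'I_n})
     ((\prod_(i < s) \prod_(j < s | i < j) G (phi i) (phi j)) *
      \prod_(r < s) x (phi r)).

(* The right-hand side of the hypothesis, with [s] x {1,2} = 'I_s * 'I_2
   (index 0 for 1, index 1 for 2). *)
Definition VKK2 (n s : nat) (G : rel 'I_n) (a b : 'I_n -> bool) : nat :=
  \sum_(phi : {ffun 'I_s * 'I_2 -> 'I_n})
     ((\prod_(i < s) \prod_(j < s | i != j)
          G (phi (i, ord0)) (phi (j, ord_max))) *
      \prod_(i < s) (a (phi (i, ord0)) * b (phi (i, ord_max)))).

(* Main.v *)
Require Import Defs.
From mathcomp Require Import all_boot.
Set Implicit Arguments. Unset Strict Implicit. Unset Printing Implicit Defensive.

Lemma prodb (I : finType) (P : pred I) (b : I -> bool) :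
  \prod_(i | P i) (b i : nat) = [forall i, P i ==> b i].
Proof.
case: forallP => H.
  by rewrite big1 // => i Pi; move: (H i); rewrite Pi /= => ->.
case: (pickP (fun i => P i && ~~ b i)) => [i /andP [Pi nbi]|H2]; last first.
  by exfalso; apply: H => i; move: (H2 i); case: (P i); case: (b i).
by rewrite (bigD1 i) //= (negbTE nbi) mul0n.
Qed.

Lemma I2 (k : 'I_2) : k = ord0 \/ k = ord_max.
Proof. by case: k => [[|[|//]]] Hk; [left|right]; apply: val_inj. Qed.

Section S.
Variables (n s : nat).

Definition splitf (phi : {ffun 'I_s.+1 -> 'I_n}) : 'I_n * {ffun 'I_s -> 'I_n} :=
  (phi ord_max, [ffun i => phi (lift ord_max i)]).
Definition joinf (p : 'I_n * {ffun 'I_s -> 'I_n}) : {ffun 'I_s.+1 -> 'I_n} :=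
  [ffun i => if unlift ord_max i is Some j then p.2 j else p.1].

Lemma splitfK : cancel splitf joinf.
Proof.
move=> phi; apply/ffunP => i; rewrite ffunE.
by case: unliftP => [j ->|->] /=; rewrite ?ffunE.
Qed.
Lemma joinfK : cancel joinf splitf.
Proof.
case=> v psi; rewrite /splitf /joinf ffunE unlift_none; congr pair.
by apply/ffunP => i; rewrite !ffunE liftK.
Qed.

Definition splitg (phi : {ffun 'I_s.+1 * 'I_2 -> 'I_n}) :
  ('I_n * 'I_n) * {ffun 'I_s * 'I_2 -> 'I_n} :=
  ((phi (ord_max, ord0), phi (ord_max, ord_max)),
   [ffun x => phi (lift ord_max x.1, x.2)]).
Definition joing (p : ('I_n * 'I_n) * {ffun 'I_s * 'I_2 -> 'I_n}) :
  {ffun 'I_s.+1 * 'I_2 -> 'I_n} :=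
  [ffun x => if unlift ord_max x.1 is Some j then p.2 (j, x.2)
             else if x.2 == ord0 then p.1.1 else p.1.2].

Lemma splitgK : cancel splitg joing.
Proof.
move=> phi; apply/ffunP => [[i k]]; rewrite ffunE /=.
case: unliftP => [j ->|->] /=; rewrite ?ffunE //.
by case: (I2 k) => ->.
Qed.
Lemma joingK : cancel joing splitg.
Proof.
case=> [[u v] psi]; rewrite /splitg /joing !ffunE /= unlift_none /=; congr pair.
by apply/ffunP => [[i k]]; rewrite !ffunE /= liftK.
Qed.

End S.

Lemma homK (n s : nat) (G : rel 'I_n) : simple_graph G ->
  hom (complete_graph s.+1) G = \sum_(v : 'I_n) VK s G (G v).
Proof.
move=> [Gsym _].
rewrite /hom -sum1_card big_mkcond /=.
rewrite (eq_bigr (fun v => \sum_(psi : {ffun 'I_s -> 'I_n})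
   ((\prod_(i < s) \prod_(j < s | i < j) G (psi i) (psi j)) *
      \prod_(r < s) G v (psi r)))) //.
rewrite pair_big /= (reindex (@splitf n s)) /=; last first.
  by apply: onW_bij; exists (@joinf n s); [apply: splitfK | apply: joinfK].
apply: eq_bigr => phi _; rewrite inE.
under eq_bigr => i _ do rewrite prodb.
rewrite prodb prodb mulnb; congr nat_of_bool.
apply/idP/idP.
- move/forallP => H; apply/andP; split.
  + apply/forallP => i; apply/forallP => j; apply/implyP => lij.
    rewrite !ffunE; move/forallP: (H (lift ord_max i)) => /(_ (lift ord_max j)).
    move/implyP; apply; apply/eqP => /lift_inj eij.
    by move: lij; rewrite eij ltnn.
  + apply/forallP => r; rewrite ffunE; move/forallP: (H ord_max) => /(_ (lift ord_max r)).
    by move/implyP; apply; apply/eqP => E; move: (neq_lift ord_max r); rewrite -E eqxx.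
- case/andP => /forallP A /forallP B; apply/forallP => x; apply/forallP => y.
  apply/implyP => nxy.
  case: (unliftP ord_max x) nxy => [i ->|->]; case: (unliftP ord_max y) => [j ->|->] //.
  + move=> nij; case: (ltngtP i j) => [lij|lji|eij].
    * by move/forallP: (A i) => /(_ j); rewrite lij !ffunE.
    * by move/forallP: (A j) => /(_ i); rewrite lji !ffunE Gsym.
    * by move: nij; rewrite (val_inj eij); case/eqP.
  + by move=> _; move: (B i); rewrite ffunE Gsym.
  + by move=> _; move: (B j); rewrite ffunE.
  + by rewrite /complete_graph eqxx.
Qed.

Lemma homT (n s : nat) (G : rel 'I_n) : simple_graph G ->
  hom (tensor_graph (complete_graph s.+1) (complete_graph 2)) G =
  \sum_(u : 'I_n) \sum_(v : 'I_n) VKK2 s G (G v) (G u).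
Proof.
move=> [Gsym _].
rewrite /hom -sum1_card big_mkcond /=.
rewrite (eq_bigr (fun uv => \sum_(v : 'I_n) VKK2 s G (G v) (G uv))) //.
rewrite pair_big /=.
rewrite (eq_bigr (fun p => \sum_(psi : {ffun 'I_s * 'I_2 -> 'I_n})
     ((\prod_(i < s) \prod_(j < s | i != j)
          G (psi (i, ord0)) (psi (j, ord_max))) *
      \prod_(i < s) (G p.2 (psi (i, ord0)) * G p.1 (psi (i, ord_max)))))) //.
rewrite pair_big /= (reindex (@splitg n s)) /=; last first.
  by apply: onW_bij; exists (@joing n s); [apply: splitgK | apply: joingK].
apply: eq_bigr => phi _; rewrite inE.
under eq_bigr => i _ do rewrite prodb.
rewrite prodb big_split /= prodb prodb !mulnb; congr nat_of_bool.
have o01 : (ord0 : 'I_2) != ord_max by [].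
apply/idP/idP.
- move/forallP => H; apply/and3P; split.
  + apply/forallP => i; apply/forallP => j; apply/implyP => lij.
    rewrite !ffunE; move/forallP: (H (lift ord_max i, ord0)) => /(_ (lift ord_max j, ord_max)).
    move/implyP; apply; apply/andP; split => //=.
    by apply/eqP => /lift_inj eij; move: lij; rewrite eij eqxx.
  + apply/forallP => r; rewrite ffunE /=; move/forallP: (H (ord_max, ord_max)) => /(_ (lift ord_max r, ord0)).
    move/implyP; apply; apply/andP; split; last by rewrite /complete_graph eq_sym.
    by apply/eqP => /= E; move: (neq_lift ord_max r); rewrite -E eqxx.
  + apply/forallP => r; rewrite ffunE /=; move/forallP: (H (ord_max, ord0)) => /(_ (lift ord_max r, ord_max)).
    move/implyP; apply; apply/andP; split => //.
    by apply/eqP => /= E; move: (neq_lift ord_max r); rewrite -E eqxx.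
- case/and3P => /forallP A /forallP B /forallP C; apply/forallP => [[x k]]; apply/forallP => [[y l]].
  rewrite /tensor_graph /complete_graph /=.
  apply/implyP => /andP [nxy nkl].
  case: (I2 k) nkl => ->; case: (I2 l) => -> //= _;
  case: (unliftP ord_max x) nxy => [i ->|->]; case: (unliftP ord_max y) => [j ->|->] //;
  rewrite ?eqxx // => nij.
  + have nij' : i != j by apply: contra nij => /eqP ->.
    by move/forallP: (A i) => /(_ j); rewrite nij' !ffunE.
  + by move: (B i); rewrite ffunE Gsym.
  + by move: (C j); rewrite ffunE.
  + have nij' : j != i by apply: contra nij => /eqP ->.
    by move/forallP: (A j) => /(_ i); rewrite nij' !ffunE Gsym.
  + by move: (C i); rewrite ffunE Gsym.
  + by move: (B j); rewrite ffunE.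
Qed.

Theorem proposition4p4 (n t : nat) (G : rel 'I_n) :
  simple_graph G -> 2 <= t ->
  (forall a b : 'I_n -> bool,
      VK t.-1 G a * VK t.-1 G b <= VKK2 t.-1 G a b) ->
  (hom (complete_graph t) G) ^ 2 <=
    hom (tensor_graph (complete_graph t) (complete_graph 2)) G.
Proof.
case: t => [|s] // sG _ /= H.
rewrite homK // homT // -mulnn big_distrl /=.
apply: leq_sum => u _; rewrite big_distrr /=.
by apply: leq_sum => v _; rewrite mulnC H.
Qed.
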